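(* Let ${\cal X}$ be a real Hilbert space, $M\in\mathbb{N}_0$ and $\kappa_1,\kappa_2>0$. For all $j\in\{1,\dots,M\}$ let $(s_j,y_j)\in{\cal X}\times{\cal X}$ satisfy $$\frac{y_j^Ts_j}{\|s_j\|^2}\ge\frac1{\kappa_1}\qquad\text{and}\qquad\frac{y_j^Ts_j}{\|y_j\|^2}\ge\frac1{\kappa_2}.$$ Let $B^{(0)}\in\mathcal{L}_+({\cal X})$, set $B_0:=B^{(0)}$ and $$B_j:=B_{j-1}+\frac{y_jy_j^T}{y_j^Ts_j}-\frac{B_{j-1}s_js_j^TB_{j-1}}{s_j^TB_{j-1}s_j},\qquad j=1,\dots,M,$$ and $B:=B_M$. Then $B\in\mathcal{L}_+({\cal X})$, $$\|B\|\le\|B^{(0)}\|+M\kappa_2,$$ and $$\|B^{-1}\|\le5^M\max\{1,\|(B^{(0)})^{-1}\|\}\max\{1,\kappa_1^M,(\kappa_1\kappa_2)^M\}.$$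
   Context: ${\cal X}$ is a real Hilbert space with inner product written $x^Ty$ and induced norm $\|\cdot\|$; for $u,v\in{\cal X}$, $uv^T$ denotes the operator $w\mapsto u\,(v^Tw)$. $\mathcal{L}({\cal X})$ is the space of bounded linear operators on ${\cal X}$ and $\mathcal{L}_+({\cal X})$ the set of self-adjoint positive definite operators in $\mathcal{L}({\cal X})$. Operator norms are the induced norms. *)

(* Defs.v *)
From HB Require Import structures.
From mathcomp Require Import all_boot all_order all_algebra.
From mathcomp Require Import all_classical all_reals all_analysis.
Set Implicit Arguments. Unset Strict Implicit. Unset Printing Implicit Defensive.
Import Order.TTheory GRing.Theory Num.Theory.
Import numFieldNormedType.Exports.
Local Open Scope classical_set_scope.
Local Open Scope ring_scope.

Section HilbertDefs.
Variable R : realType.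
Variable X : completeNormedModType R.
Variable ip : X -> X -> R.   (* the inner product  x^T y = ip x y *)

(* ip is a real inner product inducing the norm of X; together with the
   completeness of X this makes X a real Hilbert space. *)
Definition is_inner_product : Prop :=
  (forall x y, ip x y = ip y x) /\
  (forall (a : R) (x y z : X), ip (a *: x + y) z = a * ip x z + ip y z) /\
  (forall x, ip x x = `|x| ^+ 2).

Definition bounded_linear (T : X -> X) : Prop :=
  (forall (a : R) (x y : X), T (a *: x + y) = a *: T x + T y) /\
  (exists c : R, forall x, `|T x| <= c * `|x|).

Definition opnorm (T : X -> X) : R :=
  sup [set `|T x| | x in [set x : X | `|x| <= 1]].

Definition self_adjoint (T : X -> X) : Prop :=
  forall x y, ip (T x) y = ip x (T y).

Definition Lplus (T : X -> X) : Prop :=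
  bounded_linear T /\ self_adjoint T /\
  exists c : R, 0 < c /\ forall x, c * `|x| ^+ 2 <= ip x (T x).

Definition is_inverse (T C : X -> X) : Prop :=
  (forall x, T (C x) = x) /\ (forall x, C (T x) = x).

(* the inverse operator T^{-1} (chosen classically; identity if none) *)
Definition opinv (T : X -> X) : X -> X :=
  match pselect (exists C, is_inverse T C) with
  | left h => proj1_sig (cid h)
  | right _ => id
  end.

Definition bfgs_update (B : X -> X) (s y : X) : X -> X :=
  fun w => B w + (ip y w / ip y s) *: y - (ip s (B w) / ip s (B s)) *: B s.

Fixpoint bfgs_seq (B0 : X -> X) (s y : nat -> X) (j : nat) : X -> X :=
  match j with
  | O => B0
  | S j' => bfgs_update (bfgs_seq B0 s y j') (s j'.+1) (y j'.+1)
  end.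

End HilbertDefs.

(* Main.v *)
Require Import Defs.
From mathcomp Require Import all_boot all_order all_algebra.
From mathcomp Require Import all_classical all_reals all_analysis.
From mathcomp Require Import ring lra.
Import Order.TTheory GRing.Theory Num.Theory.
Import numFieldNormedType.Exports.
Local Open Scope ring_scope.
Set Implicit Arguments. Unset Strict Implicit.

Lemma lin_comb (R : realType) (V : lmodType R) (c p1 p2 q1 q2 T D : R) (bx bw y g : V) :
 c *: bx + bw + ((c * p1 + p2)/T) *: y - ((c * q1+q2)/D) *: g = c *: (bx + (p1/T) *: y - (q1/D) *: g) + (bw + (p2/T) *: y - (q2/D) *: g).
Proof.
rewrite !mulrDl !scalerDl !scalerDr !scalerN !scalerA !mulrA.
rewrite opprD !addrA; congr (_ - _).
rewrite -!addrA; congr (_ + _); rewrite !addrA addrC !addrA; congr (_ + _).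
rewrite addrC -!addrA; congr (_ + _); rewrite addrC. 

Qed.
Lemma max_pow (R : realType) (u v : R) n : 0 <= u -> 0 <= v ->
  (Num.max u v) ^+ n = Num.max (u ^+ n) (v ^+ n).
Proof.
move=> u0 v0; case: (leP u v) => h.
  by rewrite (max_idPr _) // lerXn2r.
by rewrite (max_idPl _) // lerXn2r // ltW.
Qed.
Lemma key_real (R : realType) (K m k1 k2 P Qz nx A Y T ns ny : R) :
 0 <= P -> 0 <= Qz -> P ^+ 2 <= K * Qz -> 0 <= nx -> nx <= P + A * ns -> 0 <= A ->
 A * T <= `|Y| + ny * P -> 0 <= ns -> 0 <= ny -> ns ^+ 2 <= k1 * T -> ny ^+ 2 <= k2 * T ->
 0 < T -> 1 <= K -> 1 <= m -> k1 <= m -> k1 * k2 <= m ->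
 nx ^+ 2 <= 5 * m * K * (Qz + Y ^+ 2 / T).
Proof.
move=> P0 Q0 PK nx0 hnx A0 hA ns0 ny0 hs hy T0 K1 m1 mk1 mk12.
set iT := T^-1.
have TiT : T * iT = 1 by rewrite mulfV // gt_eqF.
have iT0 : 0 < iT by rewrite invr_gt0.
rewrite /(_ / _) -/iT.
set r := ny * ns * iT; set u := `|Y| * ns * iT.
have r0 : 0 <= r by rewrite /r !mulr_ge0 // ltW.
have u0 : 0 <= u by rewrite /u !mulr_ge0 // ltW.
have Y0 : 0 <= `|Y| by [].
have YY : Y ^+ 2 = `|Y| ^+ 2 by rewrite real_normK ?num_real.
have h1 : A * ns <= u + r * P.
  have -> : A * ns = (A * T) * ns * iT by rewrite -[LHS]mulr1 -TiT; ring.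
  have : (A * T) * ns * iT <= (`|Y| + ny * P) * ns * iT.
    by rewrite ler_wpM2r ?ler_wpM2r // ltW.
  move/le_trans; apply; rewrite /u /r le_eqVlt; apply/orP; left; apply/eqP; ring.
have h2 : nx <= P * (1 + r) + u by lra.
have h3 : r ^+ 2 <= m.
  have -> : r ^+ 2 = (ny ^+ 2) * (ns ^+ 2) * iT ^+ 2 by rewrite /r; ring.
  have : (ny ^+ 2) * (ns ^+ 2) * iT ^+ 2 <= (k2 * T) * (k1 * T) * iT ^+ 2.
    by rewrite ler_wpM2r ?sqr_ge0 // ler_pM ?sqr_ge0.
  have -> : (k2 * T) * (k1 * T) * iT ^+ 2 = k1 * k2 * (T * iT) ^+ 2 by ring.
  rewrite TiT expr1n mulr1 => h; exact: le_trans h mk12.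
have h4 : u ^+ 2 <= m * (Y ^+ 2 * iT).
  have -> : u ^+ 2 = (`|Y| ^+ 2) * (ns ^+ 2) * iT ^+ 2 by rewrite /u; ring.
  have : (`|Y| ^+ 2) * (ns ^+ 2) * iT ^+ 2 <= (`|Y| ^+ 2) * (k1 * T) * iT ^+ 2.
    by rewrite ler_wpM2r ?sqr_ge0 // ler_wpM2l ?sqr_ge0.
  have -> : (`|Y| ^+ 2) * (k1 * T) * iT ^+ 2 = k1 * (Y ^+ 2 * iT) * (T * iT) by rewrite YY; ring.
  rewrite TiT mulr1 => h; apply: le_trans h _; rewrite ler_wpM2r // mulr_ge0 ?sqr_ge0 // ltW //.
have h5 : nx ^+ 2 <= 5 / 4 * (1 + r) ^+ 2 * P ^+ 2 + 5 * u ^+ 2.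
  have : nx ^+ 2 <= (P * (1 + r) + u) ^+ 2 by rewrite lerXn2r // nnegrE; nra.
  move/le_trans; apply.
  have : 0 <= (P * (1 + r) / 2 - 2 * u) ^+ 2 by apply: sqr_ge0.
  move=> h; rewrite -subr_ge0; apply: le_trans h _; rewrite le_eqVlt; apply/orP; left; apply/eqP.
  by field.
have h6 : (1 + r) ^+ 2 <= 4 * m.
  have : 0 <= (1 - r) ^+ 2 by apply: sqr_ge0.
  lra.
have YT0 : 0 <= Y ^+ 2 * iT by rewrite mulr_ge0 ?sqr_ge0 // ltW.
have h7 : nx ^+ 2 <= 5 * m * P ^+ 2 + 5 * m * (Y ^+ 2 * iT).
  apply: le_trans h5 _.
  have : (1 + r) ^+ 2 * P ^+ 2 <= 4 * m * P ^+ 2 by rewrite ler_wpM2r ?sqr_ge0.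
  lra.
apply: le_trans h7 _.
have : 5 * m * P ^+ 2 <= 5 * m * (K * Qz) by rewrite ler_wpM2l // mulr_ge0 //; lra.
have : 5 * m * (Y ^+ 2 * iT) <= 5 * m * (K * (Y ^+ 2 * iT)).
  by rewrite ler_wpM2l ?ler_peMl //; lra.
have -> : 5 * m * K * (Qz + Y ^+ 2 * iT) = 5 * m * (K * Qz) + 5 * m * (K * (Y ^+ 2 * iT)) by ring.
lra.
Qed.

Lemma CS_real (R : realType) (A C D : R) : 0 <= D ->
  (forall t, 0 <= A + 2 * t * C + t ^+ 2 * D) -> C ^+ 2 <= A * D.
Proof.
move=> D0 H.
have A0 : 0 <= A by have := H 0; rewrite mulr0 mul0r expr2 !mul0r !addr0.
case: (ltrgtP D 0) => [|Dp|DD]; first by rewrite ltNge D0.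
  have := H (- C / D).
  have -> : A + 2 * (- C / D) * C + (- C / D) ^+ 2 * D = (A * D - C ^+ 2) / D.
    by field; rewrite gt_eqF.
  by rewrite pmulr_lge0 ?invr_gt0 // subr_ge0.
rewrite DD mulr0.
case: (eqVneq C 0) => [->|Cn]; first by rewrite expr0n.
have := H (- (A + 1) / (2 * C)).
have -> : A + 2 * (- (A + 1) / (2 * C)) * C + (- (A + 1) / (2 * C)) ^+ 2 * D = -1.
  by rewrite DD mulr0 addr0; field.
by rewrite ler0N1 => /negP.
Qed.

Section IP.
Variables (R : realType) (X : completeNormedModType R) (ip : X -> X -> R).
Hypothesis hip : is_inner_product ip.

Lemma ipC x y : ip x y = ip y x. Proof. by case: hip. Qed.
Lemma ipL a x y z : ip (a *: x + y) z = a * ip x z + ip y z.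
Proof. by case: hip => _ []. Qed.
Lemma ipxx x : ip x x = `|x| ^+ 2. Proof. by case: hip => _ []. Qed.
Lemma ip0l z : ip 0 z = 0.
Proof.
have := ipL 1 0 0 z; rewrite scaler0 addr0 mul1r => /eqP.
by rewrite -subr_eq0 opprD addrA subrr sub0r oppr_eq0 => /eqP.
Qed.
Lemma ipZl a x z : ip (a *: x) z = a * ip x z.
Proof. by rewrite -[a *: x]addr0 ipL ip0l addr0. Qed.
Lemma ipDl x y z : ip (x + y) z = ip x z + ip y z.
Proof. by have := ipL 1 x y z; rewrite scale1r mul1r. Qed.
Lemma ipNl x z : ip (- x) z = - ip x z.
Proof. by rewrite -scaleN1r ipZl mulN1r. Qed.
Lemma ipBl x y z : ip (x - y) z = ip x z - ip y z.
Proof. by rewrite ipDl ipNl. Qed.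
Lemma ip0r z : ip z 0 = 0. Proof. by rewrite ipC ip0l. Qed.
Lemma ipZr a x z : ip z (a *: x) = a * ip z x.
Proof. by rewrite ipC ipZl ipC. Qed.
Lemma ipDr x y z : ip z (x + y) = ip z x + ip z y.
Proof. by rewrite ipC ipDl !(ipC z). Qed.
Lemma ipNr x z : ip z (- x) = - ip z x.
Proof. by rewrite ipC ipNl ipC. Qed.
Lemma ipBr x y z : ip z (x - y) = ip z x - ip z y.
Proof. by rewrite ipDr ipNr. Qed.

Definition lin (T : X -> X) := forall (a : R) x y, T (a *: x + y) = a *: T x + T y.

Lemma lin0 T : lin T -> T 0 = 0.
Proof.
move=> hT; have := hT 1 0 0; rewrite scaler0 addr0 scale1r => /eqP.
by rewrite -subr_eq0 opprD addrA subrr sub0r oppr_eq0 => /eqP.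
Qed.
Lemma linZ T : lin T -> forall a x, T (a *: x) = a *: T x.
Proof. by move=> hT a x; rewrite -[a *: x]addr0 hT lin0 // addr0. Qed.
Lemma linD T : lin T -> forall x y, T (x + y) = T x + T y.
Proof. by move=> hT x y; have := hT 1 x y; rewrite !scale1r. Qed.
Lemma linN T : lin T -> forall x, T (- x) = - T x.
Proof. by move=> hT x; rewrite -scaleN1r linZ // scaleN1r. Qed.
Lemma linB T : lin T -> forall x y, T (x - y) = T x - T y.
Proof. by move=> hT x y; rewrite linD // linN. Qed.

Lemma CS_form T : lin T -> self_adjoint ip T -> (forall x, 0 <= ip x (T x)) ->
  forall a b, ip a (T b) ^+ 2 <= ip a (T a) * ip b (T b).
Proof.
move=> hT hS hP a b; apply: CS_real => // t.
have := hP (a + t *: b).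
rewrite (linD hT) (linZ hT) !ipDl !ipDr !ipZl !ipZr.
have -> : ip b (T a) = ip a (T b) by rewrite ipC hS.
move=> h; apply: (le_trans h); rewrite le_eqVlt; apply/orP; left; apply/eqP; ring.
Qed.

Lemma id_lin : lin id. Proof. by []. Qed.

Lemma CS_ip a b : `|ip a b| <= `|a| * `|b|.
Proof.
have := @CS_form id id_lin (fun x y => erefl) (fun x => _) a b.
rewrite !ipxx.
have h : forall x, 0 <= ip x x by move=> x; rewrite ipxx sqr_ge0.
move=> /(_ h) H.
rewrite -(ler_pXn2r (n := 2)) ?nnegrE ?mulr_ge0 // ?real_normK ?num_real //.
by rewrite exprMn.
Qed.

Lemma opnorm_le (T : X -> X) c : 0 <= c -> (forall x, `|T x| <= c * `|x|) -> opnorm T <= c.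
Proof.
move=> c0 h; apply: ge_sup.
  by exists `|T 0|; exists 0 => //=; rewrite normr0 ler01.
move=> _ [x /= hx <-]; apply: (le_trans (h x)).
have := normr_ge0 x; nra.
Qed.

Lemma opnorm_ub (T : X -> X) c : (forall x, `|T x| <= c * `|x|) ->
  has_ubound [set `|T x| | x in [set x : X | `|x| <= 1]].
Proof.
move=> h; exists `|c| => _ [x /= hx <-]; apply: (le_trans (h x)).
have := normr_ge0 x; have := ler_norm c; have := normr_ge0 c; nra.
Qed.

Lemma opnorm_ge0 (T : X -> X) c : (forall x, `|T x| <= c * `|x|) -> 0 <= opnorm T.
Proof.
move=> h; apply: (le_trans (normr_ge0 (T 0))).
have := ub_le_sup (opnorm_ub h); apply; exists 0 => //=; by rewrite normr0 ler01.
Qed.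

Lemma opnorm_ge (T : X -> X) c : lin T -> (forall x, `|T x| <= c * `|x|) ->
  forall x, `|T x| <= opnorm T * `|x|.
Proof.
move=> hT h x; case: (eqVneq x 0) => [->|xn].
  by rewrite lin0 // !normr0 mulr0.
have nx : 0 < `|x| by rewrite normr_gt0.
have : `|T (`|x|^-1 *: x)| <= opnorm T.
  have := ub_le_sup (opnorm_ub h); apply; exists (`|x|^-1 *: x) => //=; by rewrite normfZV.
rewrite (linZ hT) normrZ ger0_norm; last by rewrite invr_ge0 ltW.
by rewrite ler_pdivrMl // mulrC.
Qed.

End IP.

Section ST.
Variables (R : realType) (X : completeNormedModType R) (ip : X -> X -> R).
Hypothesis hip : is_inner_product ip.
Let ipC := ipC hip. Let ipL := ipL hip. Let ipxx := ipxx hip.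
Let ip0l := ip0l hip. Let ipZl := ipZl hip. Let ipDl := ipDl hip. Let ipNl := ipNl hip.
Let ipBl := ipBl hip. Let ip0r := ip0r hip. Let ipZr := ipZr hip. Let ipDr := ipDr hip.
Let ipNr := ipNr hip. Let ipBr := ipBr hip. Let CS_ip := CS_ip hip. Let CS_form := CS_form hip.

Lemma step (B : X -> X) (s y : X) (N K k1 k2 : R) :
  lin B -> self_adjoint ip B ->
  1 <= K -> (forall x, `|x| ^+ 2 <= K * ip x (B x)) ->
  (forall x, ip x (B x) <= N * `|x| ^+ 2) ->
  0 < k1 -> 0 < k2 ->
  k1^-1 <= ip y s / `|s| ^+ 2 -> k2^-1 <= ip y s / `|y| ^+ 2 ->
  [/\ lin (bfgs_update ip B s y), self_adjoint ip (bfgs_update ip B s y),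
   (forall x, `|x| ^+ 2 <= 5 * Num.max 1 (Num.max k1 (k1 * k2)) * K * ip x (bfgs_update ip B s y x)),
   (forall x, ip x (bfgs_update ip B s y x) <= (N + k2) * `|x| ^+ 2) &
   ((forall b, exists w, bfgs_update ip B s y w = b) -> forall b, exists x, B x = b)].
Proof.
move=> hB hS K1 hK hN k10 k20 h1 h2.
set T := ip y s; set D := ip s (B s); set m := Num.max 1 (Num.max k1 (k1 * k2)).
have s0 : s != 0.
  apply/eqP => s0; move: h1; rewrite s0 normr0 expr0n /= invr0 mulr0.
  by rewrite leNgt invr_gt0 k10.
have ns : 0 < `|s| ^+ 2 by rewrite exprn_gt0 // normr_gt0.
have hs : `|s| ^+ 2 <= k1 * T.
  move: h1; rewrite -/T ler_pdivlMr // => h1.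
  by rewrite -[X in X <= _](mulVKf (negbT (gt_eqF k10))) ler_wpM2l // ltW.
have T0 : 0 < T by have := lt_le_trans ns hs; rewrite pmulr_rgt0.
have hy : `|y| ^+ 2 <= k2 * T.
  case: (eqVneq y 0) => [->|y0]; first by rewrite normr0 expr0n /= mulr_ge0 // ltW.
  have ny : 0 < `|y| ^+ 2 by rewrite exprn_gt0 // normr_gt0.
  move: h2; rewrite -/T ler_pdivlMr // => h2.
  by rewrite -[X in X <= _](mulVKf (negbT (gt_eqF k20))) ler_wpM2l // ltW.
have D0 : 0 < D.
  have := lt_le_trans ns (hK s); rewrite -/D pmulr_rgt0 //; lra.
have m1 : 1 <= m by rewrite le_max lexx.
have mk1 : k1 <= m by rewrite !le_max lexx orbT.
have mk12 : k1 * k2 <= m by rewrite !le_max lexx !orbT.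
have Bss : bfgs_update ip B s y s = y.
  rewrite /bfgs_update -/T -/D !divff ?gt_eqF // !scale1r.
  by rewrite addrAC subrr add0r.
have hSx : forall x, ip x (B s) = ip s (B x) by move=> x; rewrite -hS ipC.
have SA : self_adjoint ip (bfgs_update ip B s y).
  move=> x w; rewrite /bfgs_update !ipDl !ipNl !ipZl !ipDr !ipNr !ipZr.
  rewrite !hS (ipC x y) hSx; ring.
have LIN : lin (bfgs_update ip B s y).
  move=> c x w; rewrite /bfgs_update hB ipDr ipZr !ipDr !ipZr.
  exact: lin_comb.
have Qeq : forall x, ip x (bfgs_update ip B s y x) =
    ip x (B x) + ip y x ^+ 2 / T - ip s (B x) ^+ 2 / D.
  move=> x; rewrite /bfgs_update !ipDr !ipNr !ipZr (ipC x y) hSx -/T -/D; ring.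
have Q0 : forall x, 0 <= ip x (B x).
  move=> x; have := hK x; have := sqr_ge0 `|x|; nra.
split => //.
- move=> x; rewrite Qeq.
  set S := ip s (B x); set Y := ip y x; set a := S / D.
  set z := x - a *: s.
  have Bz : B z = B x - a *: B s by rewrite /z (linB hB) (linZ hB).
  have Qz : ip z (B z) = ip x (B x) - S ^+ 2 / D.
    rewrite Bz /z !ipBl !ipBr !ipZl !ipZr hSx -/S -/D /a; by field; rewrite gt_eqF.
  have xz : x = z + a *: s by rewrite /z subrK.
  have hyz : ip y z = Y - a * T by rewrite /z ipBr ipZr.
  rewrite (addrAC (ip x (B x))) -Qz.
  apply: (@key_real _ K m k1 k2 `|z| _ `|x| `|a| Y T `|s| `|y|) => //.
  + rewrite [X in `|X|]xz; apply: (le_trans (ler_normD _ _)); by rewrite normrZ.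
  + have -> : `|a| * T = `|Y - ip y z|.
      by rewrite hyz opprB addrC subrK [in RHS]normrM (gtr0_norm T0).
    apply: (le_trans (ler_normB _ _)); rewrite lerD2l; apply: (le_trans (CS_ip _ _)); by [].
- move=> x; rewrite Qeq.
  have hY : ip y x ^+ 2 / T <= k2 * `|x| ^+ 2.
    rewrite ler_pdivrMr //.
    have := CS_ip y x; rewrite -(ler_pXn2r (n := 2)) ?nnegrE ?mulr_ge0 // real_normK ?num_real // exprMn => h.
    apply: (le_trans h); have := sqr_ge0 `|x|; nra.
  have hS2 : 0 <= ip s (B x) ^+ 2 / D by rewrite divr_ge0 ?sqr_ge0 // ltW.
  have := hN x; lra.
- move=> hsurj b.
  set c := ip s b / D; set z := b - c *: B s.
  have sz : ip s z = 0 by rewrite /z ipBr ipZr /c -/D mulfVK ?subrr // gt_eqF.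
  have [w hw] := hsurj z.
  have yw : ip y w = 0 by rewrite -Bss SA hw.
  move: hw; rewrite /bfgs_update yw mul0r scale0r addr0 -/D => hw.
  set e := ip s (B w) / D.
  exists (w + (c - e) *: s); rewrite (linD hB) (linZ hB).
  have -> : B w = z + e *: B s by rewrite -hw subrK.
  by rewrite /z scalerBl addrA (addrAC _ (e *: B s)) subrK addrK.
Qed.
End ST.

Lemma real_sq4 (R : realType) (p q N : R) : 0 <= p -> 0 <= q -> 0 <= N ->
  (p ^+ 2) ^+ 2 <= (N * q ^+ 2) * (N * p ^+ 2) -> p <= N * q.
Proof.
move=> p0 q0 N0 h; case: (eqVneq p 0) => [->|pn]; first by rewrite mulr_ge0.
have pp : 0 < p ^+ 2 by rewrite exprn_gt0 // lt_def pn.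
have : p ^+ 2 <= (N * q) ^+ 2.
  rewrite -(ler_pM2r pp) exprMn; apply: le_trans h _; rewrite le_eqVlt; apply/orP; left; apply/eqP; ring.
by rewrite ler_pXn2r // nnegrE mulr_ge0.
Qed.

Lemma real_div (R : realType) (p q c : R) : 0 < c -> 0 <= p -> 0 <= q ->
  c * p ^+ 2 <= p * q -> p <= c^-1 * q.
Proof.
move=> c0 p0 q0 h; case: (eqVneq p 0) => [->|pn]; first by rewrite mulr_ge0 // invr_ge0 ltW.
have pp : 0 < p by rewrite lt_def pn.
rewrite mulrC ler_pdivlMr // mulrC -(ler_pM2l pp); apply: le_trans h.
rewrite le_eqVlt; apply/orP; left; apply/eqP; ring.
Qed.

Lemma real_div2 (R : realType) (p Q L : R) : 0 <= p -> 0 <= Q -> 0 <= L ->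
  p ^+ 2 <= Q * (L * p) -> p <= L * Q.
Proof.
move=> p0 Q0 L0 h; case: (eqVneq p 0) => [->|pn]; first by rewrite mulr_ge0.
have pp : 0 < p by rewrite lt_def pn.
rewrite -(ler_pM2r pp); apply: le_trans h _.
rewrite le_eqVlt; apply/orP; left; apply/eqP; ring.
Qed.

Section FIN.
Variables (R : realType) (X : completeNormedModType R) (ip : X -> X -> R).
Hypothesis hip : is_inner_product ip.
Let ipC := ipC hip. Let ipxx := ipxx hip.
Let ip0r := ip0r hip. 
Let CS_ip := CS_ip hip. Let CS_form := CS_form hip.

Lemma norm_from_quad (B : X -> X) N : lin B -> self_adjoint ip B ->
  (forall x, 0 <= ip x (B x)) -> 0 <= N -> (forall x, ip x (B x) <= N * `|x| ^+ 2) ->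
  forall x, `|B x| <= N * `|x|.
Proof.
move=> hB hS hQ N0 hN x.
have h := CS_form hB hS hQ x (B x).
rewrite -hS ipxx in h.
apply: real_sq4 => //; apply: (le_trans h).
apply: ler_pM; rewrite ?hQ //.
Qed.

Lemma inv_lin (T C : X -> X) : lin T -> is_inverse T C -> lin C.
Proof.
move=> hT [h1 h2] a x w.
have -> : a *: x + w = T (a *: C x + C w) by rewrite hT !h1.
by rewrite h2.
Qed.

Lemma inv_bound (T C : X -> X) c : 0 < c -> (forall x, c * `|x| ^+ 2 <= ip x (T x)) ->
  is_inverse T C -> forall u, `|C u| <= c^-1 * `|u|.
Proof.
move=> c0 hc [h1 h2] u; apply: real_div => //.
have := hc (C u); rewrite h1 => h; apply: (le_trans h).
apply: (le_trans (ler_norm _)); exact: CS_ip.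
Qed.

Lemma induct (B0 : X -> X) (s y : nat -> X) (M : nat) (k1 k2 N0 K0 : R) :
  0 < k1 -> 0 < k2 ->
  (forall j : nat, (1 <= j <= M)%N ->
     ip (y j) (s j) / `|s j| ^+ 2 >= k1^-1 /\
     ip (y j) (s j) / `|y j| ^+ 2 >= k2^-1) ->
  lin B0 -> self_adjoint ip B0 -> 1 <= K0 ->
  (forall x, `|x| ^+ 2 <= K0 * ip x (B0 x)) -> (forall x, ip x (B0 x) <= N0 * `|x| ^+ 2) ->
  forall j, (j <= M)%N ->
  [/\ lin (bfgs_seq ip B0 s y j), self_adjoint ip (bfgs_seq ip B0 s y j),
   (forall x, `|x| ^+ 2 <= (5 * Num.max 1 (Num.max k1 (k1 * k2))) ^+ j * K0 * ip x (bfgs_seq ip B0 s y j x)),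
   (forall x, ip x (bfgs_seq ip B0 s y j x) <= (N0 + j%:R * k2) * `|x| ^+ 2) &
   ((forall b, exists w, bfgs_seq ip B0 s y j w = b) -> forall b, exists x, B0 x = b)].
Proof.
move=> k10 k20 hyp hl hs K01 hK hN; elim => [_|j IH hj].
  split => //; first by move=> x; rewrite expr0 mul1r.
  by move=> x; rewrite mul0r addr0.
have [l1 s1 lo1 up1 su1] := IH (ltnW hj).
have m1 : 1 <= 5 * Num.max 1 (Num.max k1 (k1 * k2)).
  have : 1 <= Num.max 1 (Num.max k1 (k1 * k2)) by rewrite le_max lexx.
  lra.
have K1 : 1 <= (5 * Num.max 1 (Num.max k1 (k1 * k2))) ^+ j * K0.
  by rewrite mulr_ege1 // exprn_ege1.
have [hy1 hy2] := hyp j.+1 hj.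
have [l2 s2 lo2 up2 su2] := step hip l1 s1 K1 lo1 up1 k10 k20 hy1 hy2.
split => //=.
- by move=> x; apply: le_trans (lo2 x) _; rewrite exprS le_eqVlt; apply/orP; left; apply/eqP; ring.
- by move=> x; rewrite -natr1; apply: (le_trans (up2 x)); rewrite le_eqVlt; apply/orP; left; apply/eqP; ring.
- by move=> hsu; apply: su1; apply: su2.
Qed.

End FIN.

Unset Implicit Arguments.
Theorem lemma4p1 (R : realType) (X : completeNormedModType R)
  (ip : X -> X -> R) (M : nat) (kappa1 kappa2 : R)
  (s y : nat -> X) (B0 : X -> X) :
  is_inner_product ip ->
  0 < kappa1 -> 0 < kappa2 ->
  (forall j : nat, (1 <= j <= M)%N ->
     ip (y j) (s j) / `|s j| ^+ 2 >= kappa1^-1 /\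
     ip (y j) (s j) / `|y j| ^+ 2 >= kappa2^-1) ->
  Lplus ip B0 ->
  let B := bfgs_seq ip B0 s y M in
  Lplus ip B /\
  opnorm B <= opnorm B0 + M%:R * kappa2 /\
  opnorm (opinv B) <=
    5 ^+ M * Num.max 1 (opnorm (opinv B0)) *
    Num.max 1 (Num.max (kappa1 ^+ M) ((kappa1 * kappa2) ^+ M)).
Proof.
move=> hip k10 k20 hyp [[hlin [c hc]] [hsa [c0 [c00 hc0]]]] B.
set m := Num.max 1 (Num.max kappa1 (kappa1 * kappa2)).
have hl : lin B0 by [].
set N0 := opnorm B0.
have N00 : 0 <= N0 := opnorm_ge0 hc.
have hN0 : forall x, ip x (B0 x) <= N0 * `|x| ^+ 2.
  move=> x; apply: (le_trans (ler_norm _)); apply: (le_trans (CS_ip hip _ _)).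
  have := opnorm_ge hl hc x; rewrite -/N0 => h.
  have := normr_ge0 x; nra.
have Q0 : forall x, 0 <= ip x (B0 x).
  move=> x; have := hc0 x; have := sqr_ge0 `|x|; nra.
have NM0 : 0 <= N0 + M%:R * kappa2 by rewrite addr_ge0 // mulr_ge0 // ltW.
have m5 : 1 <= 5 * m.
  have : 1 <= m by rewrite le_max lexx.
  lra.
have IND : forall K0, 1 <= K0 -> (forall x, `|x| ^+ 2 <= K0 * ip x (B0 x)) ->
   [/\ lin B, self_adjoint ip B,
   (forall x, `|x| ^+ 2 <= (5 * m) ^+ M * K0 * ip x (B x)),
   (forall x, ip x (B x) <= (N0 + M%:R * kappa2) * `|x| ^+ 2) &
   ((forall b, exists w, B w = b) -> forall b, exists x, B0 x = b)].
  move=> K0 K01 hK; exact: (induct hip k10 k20 hyp hl hsa K01 hK hN0 (leqnn M)).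
have K01 : 1 <= Num.max 1 c0^-1 by rewrite le_max lexx.
have hK0 : forall x, `|x| ^+ 2 <= Num.max 1 c0^-1 * ip x (B0 x).
  move=> x; have := hc0 x => h.
  have : `|x| ^+ 2 <= c0^-1 * ip x (B0 x).
    by rewrite -(ler_pM2l c00) (mulVKf (negbT (gt_eqF c00))).
  move/le_trans; apply; apply: ler_wpM2r => //; by rewrite le_max lexx orbT.
have [lB sB loB upB suB] := IND _ K01 hK0.
have QB : forall x, 0 <= ip x (B x).
  move=> x; have := loB x; have := sqr_ge0 `|x|.
  have : 0 < (5 * m) ^+ M * Num.max 1 c0^-1.
    by rewrite mulr_gt0 // ?exprn_gt0; lra.
  nra.
have nB := norm_from_quad hip lB sB QB NM0 upB.
split.
  split; first by split => //; exists (N0 + M%:R * kappa2).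
  split => //.
  set KK := (5 * m) ^+ M * Num.max 1 c0^-1.
  have KK0 : 0 < KK by rewrite /KK mulr_gt0 // ?exprn_gt0; lra.
  exists KK^-1; split; first by rewrite invr_gt0.
  move=> x; rewrite -(ler_pM2l KK0) (mulVKf (negbT (gt_eqF KK0))); exact: loB.
split; first exact: opnorm_le.
have R1 : 1 <= 5 ^+ M * Num.max 1 (opnorm (opinv B0)) *
    Num.max 1 (Num.max (kappa1 ^+ M) ((kappa1 * kappa2) ^+ M)).
  by rewrite !mulr_ege1 ?exprn_ege1 ?le_max ?lexx ?ler1n.
case: (pselect (exists C, is_inverse B C)) => [hinv|ninv]; last first.
  have -> : opinv B = id by rewrite /opinv; case: pselect.
  apply: le_trans R1; apply: opnorm_le => // x; by rewrite mul1r.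
have [j1 j2] : is_inverse B (opinv B).
  rewrite /opinv; case: pselect => [h|h]; [exact: (proj2_sig (cid h)) | by exfalso; apply: h].
have surj0 : forall b, exists x, B0 x = b.
  by apply: suB => b; exists (opinv B b).
have inj0 : forall u v, B0 u = B0 v -> u = v.
  move=> u v huv; apply/eqP; rewrite -subr_eq0 -normr_eq0.
  have := hc0 (u - v); rewrite (linB hl) huv subrr (ip0r hip).
  rewrite pmulr_rle0 // => h; rewrite eq_le normr_ge0 andbT.
  by rewrite -(ler_pXn2r (n := 2)) ?nnegrE ?normr_ge0 // expr0n.
have [i1 i2] : is_inverse B0 (opinv B0).
  rewrite /opinv; case: pselect => [h|nh]; first exact: (proj2_sig (cid h)).
  exfalso; apply: nh.
  exists (fun b => proj1_sig (cid (surj0 b))); split.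
    by move=> x; exact: (proj2_sig (cid (surj0 x))).
  by move=> x; apply: inj0; exact: (proj2_sig (cid (surj0 (B0 x)))).
set C0 := opinv B0.
have lC0 : lin C0 := inv_lin hl (conj i1 i2).
have bC0 := inv_bound hip c00 hc0 (conj i1 i2).
set L0 := opnorm C0.
have L00 : 0 <= L0 := opnorm_ge0 bC0.
have hC0 := opnorm_ge lC0 bC0.
have lowL : forall x, `|x| ^+ 2 <= L0 * ip x (B0 x).
  move=> x; have h := CS_form hip hl hsa Q0 x (C0 x).
  rewrite i1 (ipxx hip) in h.
  have h2 : ip (C0 x) x <= L0 * `|x| ^+ 2.
    apply: (le_trans (ler_norm _)); apply: (le_trans (CS_ip hip _ _)); rewrite expr2 mulrA.
    by apply: ler_wpM2r => //; apply: hC0.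
  apply: real_div2; rewrite ?sqr_ge0 //; apply: (le_trans h).
  by apply: ler_wpM2l.
have K01' : 1 <= Num.max 1 L0 by rewrite le_max lexx.
have hK0' : forall x, `|x| ^+ 2 <= Num.max 1 L0 * ip x (B0 x).
  move=> x; apply: (le_trans (lowL x)); apply: ler_wpM2r => //; by rewrite le_max lexx orbT.
have [_ _ loB' _ _] := IND _ K01' hK0'.
set KK := (5 * m) ^+ M * Num.max 1 L0.
have KK0 : 0 < KK by rewrite /KK mulr_gt0 // ?exprn_gt0; lra.
have coB : forall x, KK^-1 * `|x| ^+ 2 <= ip x (B x).
  move=> x; rewrite -(ler_pM2l KK0) (mulVKf (negbT (gt_eqF KK0))); exact: loB'.
have KKi : 0 < KK^-1 by rewrite invr_gt0.
have bC := inv_bound hip KKi coB (conj j1 j2).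
rewrite invrK in bC.
have -> : 5 ^+ M * Num.max 1 L0 * Num.max 1 (Num.max (kappa1 ^+ M) ((kappa1 * kappa2) ^+ M)) = KK.
  have k1p : 0 <= kappa1 by exact: ltW.
  have k12p : 0 <= kappa1 * kappa2 by rewrite mulr_ge0 // ltW.
  have mp : 0 <= Num.max kappa1 (kappa1 * kappa2) by rewrite le_max k1p.
  rewrite /KK /m [in RHS]exprMn (max_pow _ ler01 mp) (max_pow _ k1p k12p) expr1n.
  by rewrite mulrAC.
apply: opnorm_le => //; exact: ltW.
Qed.
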